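(* Let $R_1,R_2$ be commutative multiplicative hyperrings with identity, and let $f:R_1\to R_2$ be a good homomorphism. Let $\alpha_1$ be a good endomorphism of $R_1$ and $\alpha_2$ a good endomorphism of $R_2$ with $\alpha_2(f(r))=f(\alpha_1(r))$ for every $r\in R_1$. If $I_2$ is an $\alpha_2$-prime hyperideal of $R_2$, then $f^{-1}(I_2)$ is an $\alpha_1$-prime hyperideal of $R_1$.
   Context: A multiplicative hyperring is an abelian group $(R,+)$ with a hyperoperation $\circ:R\times R\to \mathcal P^*(R)$ (nonempty subsets) such that $a\circ(b\circ c)=(a\circ b)\circ c$, $a\circ(b+c)\subseteq a\circ b+a\circ c$, $(b+c)\circ a\subseteq b\circ a+c\circ a$, and $a\circ(-b)=(-a)\circ b=-(a\circ b)$. Products of subsets are unions of elementwise products. Commutative means $a\circ b=b\circ a$. An identity $1$ satisfies $a\in 1\circ a$ for all $a$. A hyperideal is a nonempty $I$ closed under subtraction with $r\circ x\subseteq I$ for $r\in R$, $x\in I$. Standing assumption: all hyperideals are $\mathbf C$-hyperideals, i.e. for every finite product $A=r_1\circ\cdots\circ r_n$, $A\cap I\ne\emptyset$ implies $A\subseteq I$. A good homomorphism $f$ satisfies $f(x+y)=f(x)+f(y)$ and $f(x\circ y)=f(x)\circ f(y)$; a good endomorphism is a good homomorphism $R\to R$. For a good endomorphism $\alpha$, a hyperideal $I$ is $\alpha$-prime if for all $x,y$, $x\circ y\subseteq I$ implies $x\in I$ or $\alpha(y)\in I$. *)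

(* Defs.v *)
From HB Require Import structures.
From mathcomp Require Import all_boot all_algebra.
Set Implicit Arguments. Unset Strict Implicit. Unset Printing Implicit Defensive.
Import GRing.Theory.
Local Open Scope ring_scope.

Definition hset (T : Type) := T -> Prop.

(* A hyperoperation: [hop x y z] means z \in x o y. *)
Definition hop (R : Type) := R -> R -> hset R.

Section Hyper.
Variables (R : zmodType) (m : hop R).

Definition hsub (A B : hset R) := forall z, A z -> B z.
Definition hseteq (A B : hset R) := hsub A B /\ hsub B A.

Definition hsetD (A B : hset R) : hset R :=
  fun z => exists a b, A a /\ B b /\ z = a + b.
Definition hsetN (A : hset R) : hset R := fun z => A (- z).
Definition hsetM (A B : hset R) : hset R :=
  fun z => exists a b, A a /\ B b /\ m a b z.
Definition hsing (x : R) : hset R := fun z => z = x.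

(* finite product r1 o r2 o ... o rn  (n >= 1), i.e. x o s_1 o ... o s_k *)
Definition hprod (x : R) (s : seq R) : hset R :=
  foldl (fun A y => hsetM A (hsing y)) (hsing x) s.

Definition is_mhyperring : Prop :=
  [/\ (forall a b, exists z, m a b z),
      (forall a b c, hseteq (hsetM (hsing a) (m b c)) (hsetM (m a b) (hsing c))),
      (forall a b c, hsub (m a (b + c)) (hsetD (m a b) (m a c))),
      (forall a b c, hsub (m (b + c) a) (hsetD (m b a) (m c a))) &
      (forall a b, hseteq (m a (- b)) (hsetN (m a b)) /\
                   hseteq (m (- a) b) (hsetN (m a b)))].

Definition hcommutative : Prop := forall a b, hseteq (m a b) (m b a).

Definition has_identity : Prop := exists e : R, forall a, m e a a.

(* hyperideal; by the standing assumption every hyperideal is a C-hyperideal *)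
Definition C_property (I : hset R) : Prop :=
  forall x s, (exists z, hprod x s z /\ I z) -> hsub (hprod x s) I.

Definition hyperideal (I : hset R) : Prop :=
  [/\ exists x, I x,
      (forall x y, I x -> I y -> I (x - y)),
      (forall r x, I x -> hsub (m r x) I) &
      C_property I].

Definition alpha_prime (alpha : R -> R) (I : hset R) : Prop :=
  hyperideal I /\
  forall x y, hsub (m x y) I -> I x \/ I (alpha y).

End Hyper.

Definition good_hom (R1 R2 : zmodType) (m1 : hop R1) (m2 : hop R2)
  (f : R1 -> R2) : Prop :=
  (forall x y, f (x + y) = f x + f y) /\
  (forall x y z, m2 (f x) (f y) z <-> exists w, m1 x y w /\ z = f w).

Definition preimage (R1 R2 : Type) (f : R1 -> R2) (I : hset R2) : hset R1 :=
  fun x => I (f x).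

(* Main.v *)
Require Import Defs.
From mathcomp Require Import all_boot all_algebra.
Import GRing.Theory.
Local Open Scope ring_scope.

Lemma hprod_map (R1 R2 : zmodType) (m1 : hop R1) (m2 : hop R2) (f : R1 -> R2)
  (hf : good_hom m1 m2 f) (s : seq R1) :
  forall (A : hset R1) (B : hset R2), (forall z, A z -> B (f z)) ->
  forall z, foldl (fun A y => hsetM m1 A (hsing y)) A s z ->
    foldl (fun A y => hsetM m2 A (hsing y)) B (map f s) (f z).
Proof.
elim: s => [|y s IH] A B hAB z /=; first exact: hAB.
apply: IH => w [a [b [Ha [Hb Hm]]]].
exists (f a), (f b); split; first exact: hAB.
split; first by rewrite /hsing Hb.
by apply/(proj2 hf); exists w.
Qed.

Theorem mainTheorem11 (R1 R2 : zmodType) (m1 : hop R1) (m2 : hop R2)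
  (H1 : is_mhyperring m1) (C1 : hcommutative m1) (E1 : has_identity m1)
  (H2 : is_mhyperring m2) (C2 : hcommutative m2) (E2 : has_identity m2)
  (f : R1 -> R2) (hf : good_hom m1 m2 f)
  (alpha1 : R1 -> R1) (ha1 : good_hom m1 m1 alpha1)
  (alpha2 : R2 -> R2) (ha2 : good_hom m2 m2 alpha2)
  (hcomm : forall r, alpha2 (f r) = f (alpha1 r))
  (I2 : hset R2) (hI2 : alpha_prime m2 alpha2 I2) :
  alpha_prime m1 alpha1 (preimage f I2).
Proof.
case: hI2 => [[[x0 Hx0] Hsub Habs HC] Hpr].
case: (hf) => fadd fmul.
have f0 : f 0 = 0.
  by apply: (addrI (f 0)); rewrite addr0 -fadd addr0.
have fN : forall y, f (- y) = - f y.
  move=> y; apply/eqP; rewrite -subr_eq0 opprK -fadd addNr f0 //.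
have I0 : I2 0 by rewrite -(subrr x0); apply: Hsub.
split; first split.
- by exists 0; rewrite /preimage f0.
- by move=> x y Hx Hy; rewrite /preimage fadd fN; apply: Hsub.
- move=> r x Hx w Hw; rewrite /preimage.
  apply: (Habs (f r) (f x) Hx); apply/fmul; by exists w.
- move=> x s [z0 [Hz0 Iz0]] z Hz.
  have hid : forall z, hsing x z -> hsing (f x) (f z) by move=> ? ->.
  apply: (HC (f x) (map f s)).
    exists (f z0); split => //.
    by move: Hz0; rewrite /hprod; exact: (@hprod_map _ _ m1 m2 f hf s _ _ hid z0).
  by move: Hz; rewrite /hprod; exact: (@hprod_map _ _ m1 m2 f hf s _ _ hid z).
- move=> x y Hxy.
  have : hsub (m2 (f x) (f y)) I2.
    move=> z /fmul [w [Hw ->]]; exact: Hxy.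
  move/Hpr => [H|H]; [left => // | right].
  by rewrite /preimage -hcomm.
Qed.
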